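(* For $n>3/2$ and $x\ge 0$ the following holds: \begin{equation*} \frac{x+\sqrt{4n-6+x^2}}{2n-1}<\frac{U(n,-x)}{U (n-1,-x)}<\frac{x+\sqrt{4n-2+x^2}}{2n-1} . \end{equation*} The upper bound is also valid if $n\in (1/2,3/2)$.
   Context: $U(a,x)$ denotes the standard parabolic cylinder function (as in the NIST Digital Library of Mathematical Functions, Chapter 12), i.e. the solution of $y''(x)-(x^2/4+a)y(x)=0$ that is recessive (decays) as $x\rightarrow+\infty$. The parameter $n$ is real. *)

(* Defs.v *)
From Stdlib Require Import Reals.
From Coquelicot Require Import Coquelicot.
Open Scope R_scope.

(* [is_PCF_U a u] : u is the standard parabolic cylinder function U(a,.)
   (NIST DLMF ch. 12): u is twice differentiable on R, solves
   u''(x) = (x^2/4 + a) u(x), and is the recessive solution at +oo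
   normalized as in DLMF 12.9.1:  U(a,x) ~ x^(-a-1/2) e^(-x^2/4), x -> +oo,
   i.e.  x^(a+1/2) e^(x^2/4) U(a,x) -> 1.  These conditions determine U(a,.)
   uniquely. *)
Definition is_PCF_U (a : R) (u : R -> R) : Prop :=
  (exists u' : R -> R, forall x : R,
      is_derive u x (u' x) /\ is_derive u' x ((x ^ 2 / 4 + a) * u x)) /\
  is_lim (fun x => Rpower x (a + / 2) * exp (x ^ 2 / 4) * u x) p_infty 1.

(* Main.v *)
Require Import Defs.
From Stdlib Require Import Reals Lra Psatz Classical.
From Coquelicot Require Import Coquelicot.
Open Scope R_scope.


Lemma deriv_cont f x l : is_derive f x l -> continuity_pt f x.
Proof.
  intro H. apply is_derive_Reals in H. apply derivable_continuous_pt.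
  exists l. exact H.
Qed.

Lemma mono_le f df a b :
  (forall x, a <= x <= b -> is_derive f x (df x)) ->
  (forall x, a <= x <= b -> 0 <= df x) -> a <= b -> f a <= f b.
Proof.
  intros Hd Hp Hab.
  destruct (MVT_gen f a b df) as [c [Hc He]].
  - intros x Hx. apply Hd. rewrite Rmin_left in Hx by lra. rewrite Rmax_right in Hx by lra. lra.
  - intros x Hx. rewrite Rmin_left in Hx by lra. rewrite Rmax_right in Hx by lra.
    apply deriv_cont with (df x). apply Hd; lra.
  - rewrite Rmin_left in Hc by lra. rewrite Rmax_right in Hc by lra.
    assert (0 <= df c) by (apply Hp; lra). nra.
Qed.

Lemma const_eq f df a b :
  (forall x, a <= x <= b -> is_derive f x (df x)) ->
  (forall x, a <= x <= b -> df x = 0) -> a <= b -> f a = f b.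
Proof.
  intros Hd Hz Hab. apply Rle_antisym.
  - apply (mono_le f df); auto. intros x Hx; rewrite Hz; lra.
  - assert (- f a <= - f b); [|lra].
    apply (mono_le (fun x => - f x) (fun x => - df x)); auto.
    + intros x Hx. exact (is_derive_opp _ _ _ (Hd x Hx)).
    + intros x Hx; rewrite Hz; lra.
Qed.

Lemma ln_le_self y : 1 <= y -> 0 <= ln y <= y.
Proof.
  intro H. split.
  - rewrite <- ln_1. destruct (Req_dec y 1). subst; lra. left; apply ln_increasing; lra.
  - destruct (Req_dec (ln y) 0) as [E|E]. lra.
    pose proof (exp_ineq1 _ E). rewrite exp_ln in H0 by lra. lra.
Qed.

Lemma cont_pos D z : continuity_pt D z -> D z > 0 ->
  exists e, e > 0 /\ forall t, Rabs (t - z) < e -> D t > 0.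
Proof.
  intros Hc Hz. destruct (Hc (D z) Hz) as [al [Hal H]].
  exists al; split; auto. intros t Ht.
  destruct (Req_dec t z). subst; auto.
  assert (Hd : dist R_met (D t) (D z) < D z).
  { apply H. split. split. exact I. auto. simpl. unfold R_dist. auto. }
  simpl in Hd. unfold R_dist in Hd. apply Rabs_def2 in Hd. lra.
Qed.

Lemma cont_neg D z : continuity_pt D z -> D z < 0 ->
  exists e, e > 0 /\ forall t, Rabs (t - z) < e -> D t < 0.
Proof.
  intros Hc Hz. assert (Hc' : continuity_pt (fun t => - D t) z).
  { apply continuity_pt_opp. auto. }
  destruct (cont_pos _ _ Hc') as [e [He H]]. lra.
  exists e; split; auto. intros t Ht. specialize (H t Ht). lra.
Qed.

Lemma deriv_sign D z l : is_derive D z l -> D z = 0 -> l > 0 ->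
  exists e, e > 0 /\ (forall t, z - e < t < z -> D t < 0) /\ (forall t, z < t < z + e -> D t > 0).
Proof.
  intros Hd Hz Hl. apply is_derive_Reals in Hd.
  destruct (Hd (l/2) ltac:(lra)) as [de Hde].
  exists de. split. apply cond_pos. split.
  - intros t Ht. assert (Hh : t - z <> 0) by lra.
    assert (Ha : Rabs (t - z) < de) by (rewrite Rabs_left; lra).
    specialize (Hde _ Hh Ha). replace (z + (t - z)) with t in Hde by ring.
    rewrite Hz in Hde. apply Rabs_def2 in Hde. destruct Hde as [H1 H2].
    assert (Hq: (D t - 0) / (t - z) > 0) by lra.
    assert (Hn: t - z < 0) by lra.
    unfold Rdiv in Hq. rewrite Rminus_0_r in Hq.
    destruct (Rle_or_lt 0 (D t)) as [Hp|Hp]; auto.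
    assert (/ (t - z) < 0) by (apply Rinv_lt_0_compat; lra). nra.
  - intros t Ht. assert (Hh : t - z <> 0) by lra.
    assert (Ha : Rabs (t - z) < de) by (rewrite Rabs_right; lra).
    specialize (Hde _ Hh Ha). replace (z + (t - z)) with t in Hde by ring.
    rewrite Hz in Hde. apply Rabs_def2 in Hde. destruct Hde as [H1 H2].
    assert (Hq: (D t - 0) / (t - z) > 0) by lra.
    unfold Rdiv in Hq. rewrite Rminus_0_r in Hq.
    assert (/ (t - z) > 0) by (apply Rinv_0_lt_compat; lra).
    destruct (Rle_or_lt (D t) 0) as [Hp|Hp]; auto. nra.
Qed.


Lemma crossing D dD y0 :
  (forall y, y0 <= y -> is_derive D y (dD y)) ->
  0 <= D y0 ->
  (forall z, y0 <= z -> D z = 0 -> dD z > 0) ->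
  forall y, y0 < y -> D y > 0.
Proof.
  intros Hd H0 Hz y1 Hy1.
  destruct (Rlt_or_le 0 (D y1)) as [Hp|Hneg]; [exact Hp| exfalso].
  assert (Hinit : exists de, de > 0 /\ forall s, y0 < s < y0 + de -> D s > 0).
  { destruct H0 as [H0|H0].
    - destruct (cont_pos D y0 (deriv_cont _ _ _ (Hd y0 (Rle_refl _))) H0) as [e [He Hc]].
      exists e; split; auto. intros s Hs. apply Hc. rewrite Rabs_right; lra.
    - destruct (deriv_sign D y0 (dD y0) (Hd y0 (Rle_refl _)) (eq_sym H0) (Hz y0 (Rle_refl _) (eq_sym H0)))
        as [e [He [_ Hr]]].
      exists e; split; auto. }
  destruct Hinit as [de [Hde Hinit]].
  assert (Hy1de : y0 + de <= y1).
  { destruct (Rle_or_lt (y0+de) y1); auto. assert (D y1 > 0) by (apply Hinit; lra). lra. }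
  set (E := fun t => y0 <= t <= y1 /\ forall s, y0 < s <= t -> D s > 0).
  assert (HEb : bound E). { exists y1. intros t [Ht _]. lra. }
  assert (HEn : E (y0 + de/2)).
  { split. lra. intros s Hs. apply Hinit. lra. }
  destruct (completeness E HEb (ex_intro _ _ HEn)) as [m [Hub Hlub]].
  assert (Hm1 : y0 + de/2 <= m) by (apply Hub; auto).
  assert (Hm2 : m <= y1) by (apply Hlub; intros t [Ht _]; lra).
  assert (Hkey : forall s, y0 < s < m -> D s > 0).
  { intros s Hs. apply NNPP. intro Hn.
    assert (m <= s); [|lra]. apply Hlub. intros t [Ht Ht2].
    destruct (Rle_or_lt t s); auto. exfalso. apply Hn. apply Ht2. lra. }
  assert (Hcm : continuity_pt D m) by (apply (deriv_cont D m (dD m)); apply Hd; lra).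
  destruct (Rtotal_order (D m) 0) as [Hlt|[Heq|Hgt]].
  - destruct (cont_neg D m Hcm Hlt) as [e [He Hc]].
    set (s := Rmax (m - e/2) ((y0+m)/2)).
    assert (Hs1 : m - e/2 <= s) by apply Rmax_l.
    assert (Hs2 : (y0+m)/2 <= s) by apply Rmax_r.
    assert (Hs3 : s < m) by (unfold s; apply Rmax_lub_lt; lra).
    assert (D s > 0) by (apply Hkey; lra).
    assert (D s < 0) by (apply Hc; rewrite Rabs_left; lra). lra.
  - destruct (deriv_sign D m (dD m) (Hd m ltac:(lra)) Heq (Hz m ltac:(lra) Heq)) as [e [He [Hl _]]].
    set (s := Rmax (m - e/2) ((y0+m)/2)).
    assert (Hs1 : m - e/2 <= s) by apply Rmax_l.
    assert (Hs2 : (y0+m)/2 <= s) by apply Rmax_r.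
    assert (Hs3 : s < m) by (unfold s; apply Rmax_lub_lt; lra).
    assert (D s > 0) by (apply Hkey; lra).
    assert (D s < 0) by (apply Hl; lra). lra.
  - destruct (Req_dec m y1) as [Em|Em]. subst m. lra.
    destruct (cont_pos D m Hcm Hgt) as [e [He Hc]].
    set (t := Rmin (m + e/2) y1).
    assert (Ht1 : t <= m + e/2) by apply Rmin_l.
    assert (Ht2 : t <= y1) by apply Rmin_r.
    assert (Ht3 : m < t) by (unfold t; apply Rmin_glb_lt; lra).
    assert (E t).
    { split. lra. intros s Hs. destruct (Rlt_or_le s m). apply Hkey; lra.
      apply Hc. rewrite Rabs_right; lra. }
    assert (t <= m) by (apply Hub; auto). lra.
Qed.

Lemma crossing_back D dD y0 :
  (forall y, y <= y0 -> is_derive D y (dD y)) ->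
  0 <= D y0 ->
  (forall z, z <= y0 -> D z = 0 -> dD z < 0) ->
  forall y, y < y0 -> D y > 0.
Proof.
  intros Hd H0 Hz y Hy.
  assert (H := crossing (fun t => D (- t)) (fun t => - dD (- t)) (- y0)).
  replace y with (- - y) by ring. apply H.
  - intros t Ht. 
    assert (Hc := is_derive_comp D (fun t => - t) t (dD (-t)) (-1)).
    replace (- dD (- t)) with (scal (-1) (dD (- t))).
    apply Hc. apply Hd; lra. 
    auto_derive; auto; ring.
    unfold scal; simpl; unfold mult; simpl; ring.
  - rewrite Ropp_involutive; auto.
  - intros z Hz' Hz0. specialize (Hz (-z) ltac:(lra) Hz0). lra.
  - lra.
Qed.


Lemma deq (f : R -> R) (x l l' : R) : is_derive f x l -> l = l' -> is_derive f x l'.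
Proof. intros H <-; exact H. Qed.
Lemma dplus (f g : R -> R) x df dg : is_derive f x df -> is_derive g x dg ->
  is_derive (fun t => f t + g t) x (df + dg).
Proof. intros H1 H2. exact (is_derive_plus f g x df dg H1 H2). Qed.
Lemma dminus (f g : R -> R) x df dg : is_derive f x df -> is_derive g x dg ->
  is_derive (fun t => f t - g t) x (df - dg).
Proof. intros H1 H2. exact (is_derive_minus f g x df dg H1 H2). Qed.
Lemma dopp (f : R -> R) x df : is_derive f x df ->
  is_derive (fun t => - f t) x (- df).
Proof. intros H1. exact (is_derive_opp f x df H1). Qed.
Lemma dmult (f g : R -> R) x df dg : is_derive f x df -> is_derive g x dg ->
  is_derive (fun t => f t * g t) x (df * g x + f x * dg).
Proof. intros H1 H2. exact (is_derive_mult f g x df dg H1 H2 Rmult_comm). Qed.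
Lemma dln (f : R -> R) x df : is_derive f x df -> 0 < f x ->
  is_derive (fun t => ln (f t)) x (df / f x).
Proof.
  intros H Hp.
  assert (Hl : is_derive ln (f x) (/ f x)) by (auto_derive; [lra| field; lra]).
  eapply deq. exact (is_derive_comp ln f x _ _ Hl H).
  unfold scal; simpl; unfold mult; simpl. field. lra.
Qed.
Lemma dexp (f : R -> R) x df : is_derive f x df ->
  is_derive (fun t => exp (f t)) x (df * exp (f x)).
Proof.
  intros H.
  assert (Hl : is_derive exp (f x) (exp (f x))) by (auto_derive; auto; ring).
  eapply deq. exact (is_derive_comp exp f x _ _ Hl H).
  unfold scal; simpl; unfold mult; simpl. ring.
Qed.

Definition G (a y : R) := Rpower y (a + / 2) * exp (y ^ 2 / 4).

Lemma G_pos a y : 0 < G a y.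
Proof. unfold G, Rpower. apply Rmult_lt_0_compat; apply exp_pos. Qed.

Lemma ln_G a y : 0 < y -> ln (G a y) = (a + /2) * ln y + y ^ 2 / 4.
Proof.
  intro Hy. unfold G, Rpower. rewrite ln_mult by apply exp_pos. rewrite !ln_exp. ring.
Qed.

Lemma G_shift a y : 0 < y -> G a y = y * G (a - 1) y.
Proof.
  intro Hy. unfold G, Rpower.
  replace ((a + /2) * ln y) with ((a - 1 + /2) * ln y + ln y) by ring.
  rewrite exp_plus, exp_ln by lra. ring.
Qed.

Lemma lim_eps (f : R -> R) : is_lim f p_infty 1 ->
  forall e, 0 < e -> exists M, forall y, M < y -> Rabs (f y - 1) < e.
Proof.
  intros H e He. apply is_lim_spec in H. exact (H (mkposreal e He)).
Qed.

Lemma big_y eta A B Y0 : 0 < eta ->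
  exists y, Y0 <= y /\ 1 <= y /\ A + B * ln y < eta * y ^ 2 / 2.
Proof.
  intro He.
  set (K := (2 * (Rabs A + Rabs B + 1)) / eta).
  assert (HK : 0 < K) by (unfold K; apply Rdiv_lt_0_compat; [pose proof (Rabs_pos A); pose proof (Rabs_pos B); lra | lra]).
  set (y := Rmax (Rmax Y0 1) K + 1).
  assert (H1 : Rmax Y0 1 <= Rmax (Rmax Y0 1) K) by apply Rmax_l.
  assert (H2 : K <= Rmax (Rmax Y0 1) K) by apply Rmax_r.
  assert (H3 : Y0 <= Rmax Y0 1) by apply Rmax_l.
  assert (H4 : 1 <= Rmax Y0 1) by apply Rmax_r.
  exists y. split; [unfold y; lra|split; [unfold y; lra|]].
  assert (Hy1 : 1 <= y) by (unfold y; lra).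
  assert (HyK : K <= y) by (unfold y; lra).
  destruct (ln_le_self y Hy1) as [Hl1 Hl2].
  assert (HA : A <= Rabs A) by apply RRle_abs.
  assert (HB : B * ln y <= Rabs B * y).
  { apply Rle_trans with (Rabs B * ln y).
    - apply Rmult_le_compat_r; [lra| apply RRle_abs].
    - apply Rmult_le_compat_l; [apply Rabs_pos| lra]. }
  assert (HKe : K * eta = 2 * (Rabs A + Rabs B + 1)) by (unfold K; field; lra).
  assert (eta * y * y >= eta * y * K) by (apply Rle_ge; apply Rmult_le_compat_l; nra).
  pose proof (Rabs_pos A). pose proof (Rabs_pos B).
  nra.
Qed.


Lemma ev a (u : R -> R) :
  is_lim (fun x => Rpower x (a + /2) * exp (x^2/4) * u x) p_infty 1 ->
  forall e, 0 < e -> exists Y, 1 <= Y /\ forall y, Y <= y -> Rabs (G a y * u y - 1) < e.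
Proof.
  intros Hl e He. destruct (lim_eps _ Hl e He) as [M HM].
  exists (Rmax M 0 + 1). split. pose proof (Rmax_r M 0); lra.
  intros y Hy. apply HM. pose proof (Rmax_l M 0); lra.
Qed.

Lemma dratio a (u du : R -> R) k y :
  is_derive u y (du y) -> is_derive du y ((y^2/4 + a) * u y) -> u y <> 0 ->
  is_derive (fun t => du t / u t + k * t) y ((y^2/4 + a) - (du y / u y)^2 + k).
Proof.
  intros H1 H2 H3.
  eapply deq. apply dplus. exact (is_derive_div du u y _ _ H2 H1 H3).
  apply is_derive_scal with (f := fun t => t). apply (is_derive_id (K:=R_AbsRing)).
  simpl. unfold one; simpl. field. auto.
Qed.

Lemma dF (u du : R -> R) k y :
  is_derive u y (du y) -> 0 < u y ->
  is_derive (fun t => ln (u t) + k * t ^ 2 / 2) y (du y / u y + k * y).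
Proof.
  intros H1 H2.
  assert (H : is_derive (fun t : R => k * t ^ 2 / 2) y (k * y)) by (auto_derive; auto; lra).
  exact (dplus _ _ y _ _ (dln u y (du y) H1 H2) H).
Qed.

Section A1.
Variables (a : R) (u du : R -> R).
Hypothesis Hd : forall x, is_derive u x (du x).
Hypothesis Hdd : forall x, is_derive du x ((x^2/4 + a) * u x).
Hypothesis Hl : is_lim (fun x => Rpower x (a + /2) * exp (x^2/4) * u x) p_infty 1.

Lemma asym_p eta : 0 < eta < 1/2 ->
  exists Y, 1 <= Y /\ forall y, Y <= y ->
    0 < u y /\ -(1/2 + eta) * y <= du y / u y <= -(1/2 - eta) * y.
Proof.
  intros He.
  destruct (ev a u Hl (1/2) ltac:(lra)) as [Y0 [HY0 HY0b]].
  assert (Hpos : forall y, Y0 <= y -> 0 < u y /\ 1/2 < G a y * u y < 3/2).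
  { intros y Hy. specialize (HY0b y Hy). apply Rabs_def2 in HY0b.
    pose proof (G_pos a y). split; [|lra].
    destruct (Rlt_or_le 0 (u y)); auto. nra. }
  assert (Hc1 : exists c, 0 < c /\ c * (eta - eta^2) = Rabs a + 1).
  { exists ((Rabs a + 1) / (eta - eta^2)). pose proof (Rabs_pos a). split.
    apply Rdiv_lt_0_compat; nra. field; nra. }
  assert (Hc2 : exists c, 0 < c /\ c * (eta + eta^2) = Rabs a + 1).
  { exists ((Rabs a + 1) / (eta + eta^2)). pose proof (Rabs_pos a). split.
    apply Rdiv_lt_0_compat; nra. field; nra. }
  destruct Hc1 as [c1 [Hc1p HY1]]. destruct Hc2 as [c2 [Hc2p HY2]].
  set (Y1 := c1 + 1). set (Y2 := c2 + 1).
  set (Y := Rmax Y0 (Rmax Y1 Y2)).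
  assert (Ha1 : Y0 <= Y) by apply Rmax_l.
  assert (Ha2 : Y1 <= Y) by (eapply Rle_trans; [apply Rmax_l|apply Rmax_r]).
  assert (Ha3 : Y2 <= Y) by (eapply Rle_trans; [apply Rmax_r|apply Rmax_r]).
  pose proof (Rabs_pos a). pose proof (RRle_abs a). pose proof (Rabs_maj2 a).
  exists Y. split; [lra|]. intros y0 Hy0.
  destruct (Hpos y0 ltac:(lra)) as [Hu0 _].
  split; [exact Hu0|]. split.
  -
    apply Rnot_lt_le. intro Hc.
    set (k := 1/2 + eta).
    assert (Hcr := crossing (fun t => - (du t / u t + k * t)) (fun t => - ((t^2/4 + a) - (du t / u t)^2 + k)) y0).
    assert (Hneg : forall y, y0 < y -> du y / u y + k * y < 0).
    { intros y Hy. cut (- (du y / u y + k * y) > 0). lra. apply Hcr; auto.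
      - intros t Ht. destruct (Hpos t ltac:(lra)) as [Hut _].
        apply dopp. apply dratio; auto. lra.
      - unfold k; lra.
      - intros z Hz Hz0. assert (Hp : du z / u z = - k * z) by lra. rewrite Hp.
        assert (z >= Y2) by lra. unfold k.
        assert (z * z >= Y2 * z) by (unfold Y2 in *; nra).
        assert ((eta + eta^2) * (z * z) >= (eta + eta^2) * (c2 + 1)) by (apply Rle_ge, Rmult_le_compat_l; unfold Y2 in *; nra).
        nra. }
    set (F := fun t => ln (u t) + k * t ^ 2 / 2).
    set (F0 := F y0).
    destruct (big_y eta (F0 + 1) (a + /2) y0 ltac:(lra)) as [y [Hy1 [Hy2 Hy3]]].
    assert (HF : F y <= F0).
    { assert (- F y0 <= - F y); [|unfold F0; lra].
      apply (mono_le (fun t => - F t) (fun t => - (du t / u t + k * t))); auto.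
      - intros t Ht. destruct (Hpos t ltac:(lra)) as [Hut _].
        apply dopp. apply dF; auto.
      - intros t Ht. destruct (Req_dec t y0) as [->|Hne]. unfold k; lra.
        assert (du t / u t + k * t < 0) by (apply Hneg; lra). lra. }
    destruct (Hpos y ltac:(lra)) as [Huy [HG1 HG2]].
    pose proof (G_pos a y).
    assert (Hln : ln (1/2) < ln (G a y * u y)) by (apply ln_increasing; lra).
    rewrite ln_mult in Hln by lra. rewrite ln_G in Hln by lra.
    assert (ln (1/2) = - ln 2) by (unfold Rdiv; rewrite Rmult_1_l, ln_Rinv; lra).
    pose proof ln_lt_2. pose proof (ln_lt_2). 
    assert (ln 2 < 1). { rewrite <- ln_exp with 1. apply ln_increasing. lra. pose proof (exp_ineq1 1); lra. }
    unfold F, F0, k in *. lra.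
  -
    apply Rnot_lt_le. intro Hc.
    set (k := 1/2 - eta).
    assert (Hcr := crossing (fun t => (du t / u t + k * t)) (fun t => ((t^2/4 + a) - (du t / u t)^2 + k)) y0).
    assert (Hpo : forall y, y0 < y -> du y / u y + k * y > 0).
    { intros y Hy. apply Hcr; auto.
      - intros t Ht. destruct (Hpos t ltac:(lra)) as [Hut _].
        apply dratio; auto. lra.
      - unfold k; lra.
      - intros z Hz Hz0. assert (Hp : du z / u z = - k * z) by lra. rewrite Hp.
        assert (z >= Y1) by lra. unfold k.
        assert (z * z >= Y1 * z) by (unfold Y1 in *; nra).
        assert ((eta - eta^2) * (z * z) >= (eta - eta^2) * (c1 + 1)) by (apply Rle_ge, Rmult_le_compat_l; unfold Y1 in *; nra).
        nra. }
    set (F := fun t => ln (u t) + k * t ^ 2 / 2).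
    set (F0 := F y0).
    destruct (big_y eta (1 - F0) (- (a + /2)) y0 ltac:(lra)) as [y [Hy1 [Hy2 Hy3]]].
    assert (HF : F0 <= F y).
    { apply (mono_le F (fun t => (du t / u t + k * t))); auto.
      - intros t Ht. destruct (Hpos t ltac:(lra)) as [Hut _]. apply dF; auto.
      - intros t Ht. destruct (Req_dec t y0) as [->|Hne]. unfold k; lra.
        assert (du t / u t + k * t > 0) by (apply Hpo; lra). lra. }
    destruct (Hpos y ltac:(lra)) as [Huy [HG1 HG2]].
    pose proof (G_pos a y).
    assert (Hln : ln (G a y * u y) < ln (3/2)) by (apply ln_increasing; nra).
    rewrite ln_mult in Hln by lra. rewrite ln_G in Hln by lra.
    assert (ln (3/2) < 1). { rewrite <- ln_exp with 1. apply ln_increasing. lra. pose proof (exp_ineq1 1); lra. }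
    unfold F, F0, k in *. lra.
Qed.
End A1.


Lemma gronwall (z dz Q : R -> R) T t K :
  (forall y, is_derive z y (dz y)) ->
  (forall y, is_derive dz y (Q y * z y)) ->
  z T = 0 -> dz T = 0 -> t <= T -> 0 <= K ->
  (forall y, t <= y <= T -> Rabs (Q y) <= K) -> z t = 0.
Proof.
  intros H1 H2 HzT HdT Ht HK HQ.
  set (H := fun y => (z y ^ 2 + dz y ^ 2) * exp ((1 + K) * y)).
  assert (Hle : H t <= H T).
  { apply (mono_le H (fun y => (2 * z y * dz y + 2 * dz y * (Q y * z y)) * exp ((1+K) * y)
                               + (z y ^ 2 + dz y ^ 2) * ((1 + K) * exp ((1+K) * y)))); auto.
    - intros y Hy. unfold H.
      apply (dmult (fun y => z y ^ 2 + dz y ^ 2) (fun y => exp ((1 + K) * y))).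
      + eapply deq. apply dplus.
        * apply (is_derive_pow z 2 y (dz y) (H1 y)).
        * apply (is_derive_pow dz 2 y _ (H2 y)).
        * simpl. ring.
      + eapply deq. apply dexp.
        assert (is_derive (fun y : R => (1 + K) * y) y (1 + K)) by (auto_derive; auto; lra).
        exact H0. ring.
    - intros y Hy. specialize (HQ y Hy).
      pose proof (exp_pos ((1+K)*y)).
      set (e := exp ((1+K)*y)) in *.
      assert (Hab : Rabs (Q y) <= K) by auto.
      pose proof (RRle_abs (Q y)); pose proof (Rabs_maj2 (Q y)).
      assert (Hs: 0 <= (z y ^ 2 + dz y ^ 2) * (1 + K) + 2 * z y * dz y * (1 + Q y)).
      { assert (0 <= (z y + dz y)^2) by apply pow2_ge_0. assert (0 <= (z y - dz y)^2) by apply pow2_ge_0.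
        set (m := z y ^ 2 + dz y ^ 2).
        assert (Hm1 : m >= 2 * (z y * dz y)) by (unfold m; nra).
        assert (Hm2 : m >= - 2 * (z y * dz y)) by (unfold m; nra).
        set (p := z y * dz y) in *.
        replace (2 * z y * dz y * (1 + Q y)) with (2 * p * (1 + Q y)) by (unfold p; ring).
        destruct (Rle_or_lt 0 p); destruct (Rle_or_lt 0 (1 + Q y)).
        - nra.
        - assert (p * (1 + Q y) >= p * (- (1 + K))) by nra. nra.
        - assert (p * (1 + Q y) >= p * (1 + K)) by nra. nra.
        - nra. }
      nra. }
  unfold H in Hle. rewrite HzT, HdT in Hle.
  assert (Hp := exp_pos ((1+K)*t)).
  assert (z t ^ 2 + dz t ^ 2 <= 0) by nra.
  nra.
Qed.


Section Rec.
Variables (a : R) (u du v dv : R -> R).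
Hypothesis Hud : forall x, is_derive u x (du x).
Hypothesis Hudd : forall x, is_derive du x ((x^2/4 + a) * u x).
Hypothesis Hul : is_lim (fun x => Rpower x (a + /2) * exp (x^2/4) * u x) p_infty 1.
Hypothesis Hvd : forall x, is_derive v x (dv x).
Hypothesis Hvdd : forall x, is_derive dv x ((x^2/4 + (a - 1)) * v x).
Hypothesis Hvl : is_lim (fun x => Rpower x (a - 1 + /2) * exp (x^2/4) * v x) p_infty 1.

Let w y := y / 2 * u y - du y.
Let dw y := (/2 - (y^2/4 + a)) * u y + y / 2 * du y.

Lemma dhalf (y : R) : is_derive (fun y : R => y / 2) y (/2).
Proof. auto_derive; auto; lra. Qed.

Lemma w_d (y : R) : is_derive w y (dw y).
Proof.
  unfold w, dw. eapply deq. apply (dminus (fun y => y / 2 * u y) du).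
  apply (dmult (fun y => y / 2) u). apply dhalf. apply Hud. apply Hudd.
  unfold Rdiv; ring.
Qed.

Lemma dw_d (y : R) : is_derive dw y ((y^2/4 + (a - 1)) * w y).
Proof.
  unfold w, dw. eapply deq.
  apply (dplus (fun y => (/2 - (y^2/4 + a)) * u y) (fun y => y / 2 * du y)).
  apply (dmult (fun y => (/2 - (y^2/4 + a))) u).
  assert (is_derive (fun y : R => (/2 - (y^2/4 + a))) y (- (y / 2))) by (auto_derive; auto; field).
  exact H. apply Hud.
  apply (dmult (fun y => y / 2) du). apply dhalf. apply Hudd.
  field.
Qed.

Let W y := w y * dv y - dw y * v y.

Lemma W_d (y : R) : is_derive W y 0.
Proof.
  unfold W. eapply deq.
  apply (dminus (fun y => w y * dv y) (fun y => dw y * v y)).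
  apply (dmult w dv). apply w_d. apply Hvdd.
  apply (dmult dw v). apply dw_d. apply Hvd.
  ring.
Qed.

Lemma W_const (y : R) : W y = W 0.
Proof.
  destruct (Rle_or_lt 0 y).
  - symmetry. apply (const_eq W (fun _ => 0)); auto. intros; apply W_d.
  - apply (const_eq W (fun _ => 0)); auto. intros; apply W_d. lra.
Qed.

Lemma ln32 : ln (3/2) < 1.
Proof. rewrite <- ln_exp with 1. apply ln_increasing. lra. pose proof (exp_ineq1 1); lra. Qed.

Lemma W0 : W 0 = 0.
Proof.
  apply NNPP. intro Hn.
  destruct (asym_p a u du Hud Hudd Hul (1/4) ltac:(lra)) as [Y1 [HY1 H1]].
  destruct (asym_p (a-1) v dv Hvd Hvdd Hvl (1/4) ltac:(lra)) as [Y2 [HY2 H2]].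
  destruct (ev a u Hul (1/2) ltac:(lra)) as [Y3 [HY3 H3]].
  destruct (ev (a-1) v Hvl (1/2) ltac:(lra)) as [Y4 [HY4 H4]].
  set (K := 2 + Rabs a).
  assert (HWp : 0 < Rabs (W 0)) by (apply Rabs_pos_lt; auto).
  destruct (big_y 1 (ln K + 2 - ln (Rabs (W 0))) (2 - 2 * a) (Rmax (Rmax Y1 Y2) (Rmax Y3 Y4)) ltac:(lra))
    as [y [Hy1 [Hy2 Hy3]]].
  pose proof (Rmax_l Y1 Y2). pose proof (Rmax_r Y1 Y2). pose proof (Rmax_l Y3 Y4). pose proof (Rmax_r Y3 Y4).
  pose proof (Rmax_l (Rmax Y1 Y2) (Rmax Y3 Y4)). pose proof (Rmax_r (Rmax Y1 Y2) (Rmax Y3 Y4)).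
  destruct (H1 y ltac:(lra)) as [Hu [Hp1 Hp2]].
  destruct (H2 y ltac:(lra)) as [Hv [Hr1 Hr2]].
  specialize (H3 y ltac:(lra)). specialize (H4 y ltac:(lra)).
  apply Rabs_def2 in H3. apply Rabs_def2 in H4.
  set (p := du y / u y) in *. set (r := dv y / v y) in *.
  assert (Hdu : du y = p * u y) by (unfold p; field; lra).
  assert (Hdv : dv y = r * v y) by (unfold r; field; lra).
  assert (HW : W 0 = u y * v y * ((y/2 - p) * r - /2 + (y^2/4 + a) - y/2 * p)).
  { rewrite <- (W_const y). unfold W, w, dw. rewrite Hdu, Hdv. field. }
  set (B := (y/2 - p) * r - /2 + (y^2/4 + a) - y/2 * p) in *.
  assert (HB : Rabs B <= K * (y * y)).
  { pose proof (RRle_abs a). pose proof (Rabs_maj2 a). unfold K.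
    apply Rabs_le. unfold B. split.
    - assert (E1 : (y/2 - p) * r >= (5/4 * y) * r).
      { assert (0 <= (5/4*y - (y/2-p)) * (-r)) by (apply Rmult_le_pos; lra). nra. }
      assert (E2 : (5/4 * y) * r >= (5/4 * y) * (-(3/4) * y)).
      { apply Rle_ge. apply Rmult_le_compat_l; lra. }
      assert (E3 : y/2 * p <= y / 2 * (-(1/4) * y)).
      { apply Rmult_le_compat_l; lra. }
      assert (E4 : 1 <= y * y) by nra. nra.
    - assert (E1 : (y/2 - p) * r <= 0).
      { assert (0 <= (y/2-p) * (-r)) by (apply Rmult_le_pos; lra). nra. }
      assert (E3 : y/2 * p >= y / 2 * (-(3/4) * y)).
      { apply Rle_ge. apply Rmult_le_compat_l; lra. }
      assert (E4 : 1 <= y * y) by nra. nra. }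
  assert (Hle : Rabs (W 0) <= K * (y * y * u y * v y)).
  { rewrite HW. rewrite !Rabs_mult. rewrite (Rabs_right (u y)) by lra. rewrite (Rabs_right (v y)) by lra.
    replace (K * (y * y * u y * v y)) with ((u y * v y) * (K * (y * y))) by ring.
    apply Rmult_le_compat_l; [nra|auto]. }
  assert (HKp : 0 < K) by (unfold K; pose proof (Rabs_pos a); lra).
  assert (Hln : ln (Rabs (W 0)) <= ln (K * (y * y * u y * v y))).
  { destruct Hle as [Hlt|Heq]. left; apply ln_increasing; auto. rewrite Heq; lra. }
  assert (Hyy : 0 < y * y) by nra.
  assert (Hyyu : 0 < y * y * u y) by nra.
  assert (Hyyuv : 0 < y * y * u y * v y) by nra.
  rewrite (ln_mult K _ HKp Hyyuv) in Hln.
  rewrite (ln_mult (y * y * u y) (v y) Hyyu Hv) in Hln.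
  rewrite (ln_mult (y * y) (u y) Hyy Hu) in Hln.
  rewrite (ln_mult y y ltac:(lra) ltac:(lra)) in Hln.
  pose proof (G_pos a y). pose proof (G_pos (a-1) y).
  assert (L1 : ln (G a y * u y) < ln (3/2)) by (apply ln_increasing; nra).
  assert (L2 : ln (G (a-1) y * v y) < ln (3/2)) by (apply ln_increasing; nra).
  rewrite ln_mult in L1, L2 by lra. rewrite ln_G in L1, L2 by lra.
  pose proof ln32. lra.
Qed.

Lemma lim_py : is_lim (fun y => /2 - du y / u y / y) p_infty 1.
Proof.
  apply is_lim_spec. intros [eps Heps]. simpl.
  set (eta := Rmin (eps/2) (1/4)).
  assert (He1 : eta <= eps/2) by apply Rmin_l. assert (He2 : eta <= 1/4) by apply Rmin_r.
  assert (He0 : 0 < eta) by (unfold eta; apply Rmin_glb_lt; lra).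
  destruct (asym_p a u du Hud Hudd Hul eta ltac:(lra)) as [Y [HY H]].
  exists Y. intros y Hy. destruct (H y ltac:(lra)) as [Hu [H1 H2]].
  set (p := du y / u y) in *.
  assert (Hq : /2 - p / y - 1 = - (p + y / 2) / y) by (field; lra).
  rewrite Hq. unfold Rdiv. rewrite Rabs_mult, Rabs_Ropp, Rabs_inv, (Rabs_right y) by lra.
  assert (Rabs (p + y * /2) <= eta * y).
  { apply Rabs_le. split; nra. }
  apply Rle_lt_trans with (eta * y * / y).
  apply Rmult_le_compat_r. left; apply Rinv_0_lt_compat; lra. auto.
  replace (eta * y * / y) with eta by (field; lra). lra.
Qed.

Lemma lim_w : is_lim (fun y => G (a - 1) y * w y) p_infty 1.
Proof.
  destruct (asym_p a u du Hud Hudd Hul (1/4) ltac:(lra)) as [Y [HY H]].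
  apply is_lim_ext_loc with (fun y => (G a y * u y) * (/2 - du y / u y / y)).
  - exists Y. intros y Hy. destruct (H y ltac:(lra)) as [Hu _].
    rewrite (G_shift a y) by lra. unfold w. field. split; lra.
  - replace (Finite 1) with (Rbar_mult 1 1) by (simpl; f_equal; ring).
    apply is_lim_mult. exact Hul. exact lim_py. simpl. exact I.
Qed.

Lemma w_eq_v_ray : exists Y, forall y, Y <= y -> w y = v y.
Proof.
  destruct (asym_p (a-1) v dv Hvd Hvdd Hvl (1/4) ltac:(lra)) as [Y [HY H]].
  set (c := w Y / v Y).
  assert (Hc : forall y, Y <= y -> w y / v y = c).
  { intros y Hy. symmetry. unfold c.
    apply (const_eq (fun y => w y / v y) (fun _ => 0)); auto.
    intros t Ht. destruct (H t ltac:(lra)) as [Hv _].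
    eapply deq. apply (is_derive_div w v t (dw t) (dv t)). apply w_d. apply Hvd. lra.
    assert (HW := W_const t). rewrite W0 in HW. unfold W in HW.
    field_simplify; [|lra]. replace (dw t * v t - w t * dv t) with (- (w t * dv t - dw t * v t)) by ring.
    rewrite HW. field. lra. }
  assert (Hc1 : c = 1).
  { assert (L1 := lim_w).
    assert (L2 : is_lim (fun y => G (a-1) y * w y) p_infty (c * 1)).
    { apply is_lim_ext_loc with (fun y => c * (G (a-1) y * v y)).
      exists Y. intros y Hy. destruct (H y ltac:(lra)) as [Hv _].
      rewrite <- (Hc y) by lra. field. lra.
      apply (is_lim_scal_l (fun y => G (a-1) y * v y) c p_infty 1). exact Hvl. }
    apply is_lim_unique in L1. apply is_lim_unique in L2. rewrite L1 in L2.
    injection L2. lra. }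
  exists Y. intros y Hy. destruct (H y Hy) as [Hv _].
  specialize (Hc y Hy). rewrite Hc1 in Hc.
  apply (Rmult_eq_compat_r (v y)) in Hc. field_simplify in Hc; lra.
Qed.

Lemma w_eq_v (y : R) : v y = w y.
Proof.
  destruct w_eq_v_ray as [Y HY].
  set (z := fun t => w t - v t). set (dz := fun t => dw t - dv t).
  assert (Hzd : forall t, is_derive z t (dz t)).
  { intros t. apply (dminus w v). apply w_d. apply Hvd. }
  assert (Hdzd : forall t, is_derive dz t ((t^2/4 + (a-1)) * z t)).
  { intros t. eapply deq. apply (dminus dw dv). apply dw_d. apply Hvdd. unfold z. ring. }
  set (T := Rmax Y 0 + 1).
  assert (HT0 : Y + 1 <= T) by (unfold T; pose proof (Rmax_l Y 0); lra).
  assert (HzT : z T = 0) by (unfold z; rewrite HY; [ring|lra]).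
  assert (HdT : dz T = 0).
  { assert (H0 : is_derive z T 0).
    { apply is_derive_ext_loc with (fun _ => 0).
      exists (mkposreal 1 Rlt_0_1). intros t Ht. simpl in Ht.
      change (Rabs (t - T) < 1) in Ht. apply Rabs_def2 in Ht.
      unfold z. rewrite HY by lra. rewrite Rminus_diag_eq; reflexivity.
      apply (is_derive_const (K:=R_AbsRing) (V:=R_NormedModule) 0 T). }
    apply is_derive_unique in H0. pose proof (is_derive_unique _ _ _ (Hzd T)) as H1. simpl in *. congruence. }
  destruct (Rle_or_lt T y) as [Hy|Hy].
  - symmetry. apply HY. lra.
  - assert (z y = 0).
    { apply (gronwall z dz (fun t => t^2/4 + (a-1)) T y ((y^2 + T^2)/4 + Rabs (a-1))); auto.
      lra. pose proof (Rabs_pos (a-1)). nra.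
      intros t Ht. eapply Rle_trans. apply Rabs_triang. pose proof (Rabs_pos (a-1)).
      rewrite Rabs_right by nra.
      assert (t^2 <= y^2 + T^2).
      { destruct (Rle_or_lt 0 t). assert (t^2 <= T^2) by nra. nra. assert (t^2 <= y^2) by nra. nra. }
      lra. }
    unfold z in H. lra.
Qed.

Lemma dv_eq (y : R) : dv y = dw y.
Proof.
  assert (H1 : is_derive v y (dw y)).
  { apply is_derive_ext with w. intros t. symmetry. apply w_eq_v. apply w_d. }
  apply is_derive_unique in H1. pose proof (is_derive_unique _ _ _ (Hvd y)) as H2. congruence.
Qed.

End Rec.


Lemma positivity c (u du : R -> R) :
  0 < c ->
  (forall x, is_derive u x (du x)) ->
  (forall x, is_derive du x ((x^2/4 + c) * u x)) ->
  is_lim (fun x => Rpower x (c + /2) * exp (x^2/4) * u x) p_infty 1 ->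
  forall y, 0 < u y /\ du y < 0.
Proof.
  intros Hc Hd Hdd Hl.
  destruct (asym_p c u du Hd Hdd Hl (1/4) ltac:(lra)) as [Y [HY H]].
  assert (HE : forall y, u y * du y < 0).
  { intros y. set (t := Rmax y Y).
    assert (Ht1 : y <= t) by apply Rmax_l. assert (Ht2 : Y <= t) by apply Rmax_r.
    destruct (H t Ht2) as [Hu [_ Hp]].
    assert (Hdt : du t < 0).
    { assert (du t / u t < 0) by nra.
      apply Rnot_le_lt. intro. assert (0 <= du t / u t). apply Rdiv_le_0_compat; lra. lra. }
    assert (u y * du y <= u t * du t).
    { apply (mono_le (fun y => u y * du y) (fun y => du y * du y + u y * ((y^2/4 + c) * u y))); auto.
      intros x Hx. apply (dmult u du). apply Hd. apply Hdd.
      intros x Hx. assert (0 < x^2/4 + c) by (pose proof (pow2_ge_0 x); lra).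
      assert (0 <= du x * du x) by nra. assert (0 <= u x * u x) by nra. nra. }
    nra. }
  assert (Hcont : continuity u).
  { intros x. apply (deriv_cont u x (du x)). apply Hd. }
  assert (Hpos : forall y, 0 < u y).
  { intros y. destruct (H Y (Rle_refl _)) as [HuY _].
    destruct (Rtotal_order (u y) 0) as [Hn|[Hz|Hp]]; auto.
    - exfalso. destruct (Rle_or_lt Y y).
      + destruct (H y H0). lra.
      + destruct (IVT u y Y Hcont H0 Hn HuY) as [z [_ Hz]].
        specialize (HE z). rewrite Hz in HE. lra.
    - specialize (HE y). rewrite Hz in HE. lra. }
  intros y. split; auto. specialize (HE y). specialize (Hpos y).
  apply Rnot_le_lt. intro. nra.
Qed.

Section Main.
Variables (n : R) (u du v dv : R -> R).
Hypothesis Hn : 1/2 < n.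
Hypothesis Hud : forall x, is_derive u x (du x).
Hypothesis Hudd : forall x, is_derive du x ((x^2/4 + n) * u x).
Hypothesis Hul : is_lim (fun x => Rpower x (n + /2) * exp (x^2/4) * u x) p_infty 1.
Hypothesis Hvd : forall x, is_derive v x (dv x).
Hypothesis Hvdd : forall x, is_derive dv x ((x^2/4 + (n - 1)) * v x).
Hypothesis Hvl : is_lim (fun x => Rpower x (n - 1 + /2) * exp (x^2/4) * v x) p_infty 1.

Lemma rec1 y : du y = y / 2 * u y - v y.
Proof. rewrite (w_eq_v n u du v dv Hud Hudd Hul Hvd Hvdd Hvl y). ring. Qed.

Lemma rec2 y : dv y = (1/2 - n) * u y - y / 2 * v y.
Proof.
  rewrite (dv_eq n u du v dv Hud Hudd Hul Hvd Hvdd Hvl y).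
  rewrite (w_eq_v n u du v dv Hud Hudd Hul Hvd Hvdd Hvl y). field.
Qed.

Lemma upos y : 0 < u y /\ du y < 0.
Proof. apply (positivity n u du); auto; lra. Qed.

Lemma vpos y : 0 < v y.
Proof.
  destruct (Rle_or_lt 0 y).
  - destruct (upos y). rewrite (w_eq_v n u du v dv Hud Hudd Hul Hvd Hvdd Hvl y). nra.
  - apply (crossing_back v dv 0); auto.
    + destruct (upos 0). rewrite (w_eq_v n u du v dv Hud Hudd Hul Hvd Hvdd Hvl 0). lra.
    + intros z Hz Hz0. rewrite rec2, Hz0. destruct (upos z). nra.
Qed.

Definition Rr y := u y / v y.

Lemma Rr_d (y : R) : is_derive Rr y (y * Rr y - 1 + (n - 1/2) * Rr y ^ 2).
Proof.
  unfold Rr. pose proof (vpos y).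
  eapply deq. apply (is_derive_div u v y (du y) (dv y)). apply Hud. apply Hvd. lra.
  rewrite rec1, rec2. field. lra.
Qed.

Lemma Rr_pos y : 0 < Rr y.
Proof. unfold Rr. destruct (upos y). pose proof (vpos y). apply Rdiv_lt_0_compat; auto. Qed.

Lemma yRr y : 0 < y -> y * Rr y = (G n y * u y) / (G (n-1) y * v y).
Proof.
  intro Hy. unfold Rr. rewrite (G_shift n y Hy). pose proof (vpos y). pose proof (G_pos (n-1) y).
  field. split; lra.
Qed.

Lemma yRr_bounds e : 0 < e < 1 -> exists Y, 1 <= Y /\ forall y, Y <= y ->
  (1 - e) / (1 + e) < y * Rr y < (1 + e) / (1 - e).
Proof.
  intros He.
  destruct (ev n u Hul e ltac:(lra)) as [Y1 [HY1 H1]].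
  destruct (ev (n-1) v Hvl e ltac:(lra)) as [Y2 [HY2 H2]].
  exists (Rmax Y1 Y2). split. pose proof (Rmax_l Y1 Y2); lra.
  intros y Hy. pose proof (Rmax_l Y1 Y2). pose proof (Rmax_r Y1 Y2).
  specialize (H1 y ltac:(lra)). specialize (H2 y ltac:(lra)).
  apply Rabs_def2 in H1. apply Rabs_def2 in H2.
  rewrite yRr by lra.
  set (A := G n y * u y) in *. set (B := G (n-1) y * v y) in *.
  split.
  - apply Rlt_le_trans with ((1 - e) / B).
    + unfold Rdiv. apply Rmult_lt_compat_l. lra. apply Rinv_lt_contravar; nra.
    + unfold Rdiv. apply Rmult_le_compat_r. left; apply Rinv_0_lt_compat; lra. lra.
  - apply Rlt_le_trans with ((1 + e) / B).
    + unfold Rdiv. apply Rmult_lt_compat_r. apply Rinv_0_lt_compat; lra. lra.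
    + unfold Rdiv. apply Rmult_le_compat_l. lra. apply Rinv_le_contravar; lra.
Qed.

Definition Phi y := (- y + sqrt (4 * n - 2 + y ^ 2)) / (2 * n - 1).

Lemma upper y : Rr y < Phi y.
Proof.
  apply Rnot_le_lt. intro H0.
  set (s := fun y => sqrt (4 * n - 2 + y ^ 2)).
  assert (Hs : forall y, 0 < s y /\ s y * s y = 4 * n - 2 + y ^ 2).
  { intros t. unfold s. pose proof (pow2_ge_0 t). split. apply sqrt_lt_R0. lra.
    apply sqrt_sqrt. lra. }
  assert (Hsy : forall y, y < s y).
  { intros t. destruct (Hs t). destruct (Rle_or_lt t 0). lra. nra. }
  assert (Hsy2 : forall y, - y < s y).
  { intros t. destruct (Hs t). destruct (Rle_or_lt t 0). nra. lra. }
  assert (HdPhi : forall y, is_derive Phi y ((-1 + y / s y) / (2 * n - 1))).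
  { intros t. unfold Phi. destruct (Hs t). auto_derive.
    - pose proof (pow2_ge_0 t). nra.
    - replace (t * (t * 1)) with (t ^ 2) by ring. unfold s in *. field. split. lra. lra. }
  assert (Hphi_eq : forall y, (n - 1/2) * Phi y ^ 2 + y * Phi y - 1 = 0).
  { intros t. unfold Phi. fold (s t). destruct (Hs t).
    replace ((n - 1 / 2) * ((- t + s t) / (2 * n - 1)) ^ 2 + t * ((- t + s t) / (2 * n - 1)) - 1)
      with ((s t * s t - (4 * n - 2 + t^2)) / (2 * (2 * n - 1))) by (field; lra).
    rewrite H1. unfold Rdiv. ring. }
  assert (Hphi_pos : forall y, 0 < Phi y).
  { intros t. unfold Phi. fold (s t). apply Rdiv_lt_0_compat. specialize (Hsy t). lra. lra. }
  assert (Hcr := crossing (fun y => Rr y - Phi y)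
      (fun y => (y * Rr y - 1 + (n - 1/2) * Rr y ^ 2) - (-1 + y / s y) / (2 * n - 1)) y).
  assert (Hgt : forall t, y < t -> Rr t - Phi t > 0).
  { apply Hcr.
    - intros t _. apply (dminus Rr Phi). apply Rr_d. apply HdPhi.
    - lra.
    - intros z _ Hz. assert (HR : Rr z = Phi z) by lra. rewrite HR.
      pose proof (Hphi_eq z). destruct (Hs z). specialize (Hsy z).
      assert (z / s z < 1). { apply (Rmult_lt_reg_r (s z)); auto. field_simplify; lra. }
      assert (0 < 2 * n - 1) by lra.
      assert ((-1 + z / s z) / (2 * n - 1) < 0). { apply Rdiv_neg_pos; lra. }
      lra. }
  set (y1 := y + 1).
  assert (Hinc : forall t, y1 <= t -> Rr y1 <= Rr t).
  { intros t Ht. apply (mono_le Rr (fun y => y * Rr y - 1 + (n - 1/2) * Rr y ^ 2)); auto.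
    - intros x _. apply Rr_d.
    - intros x Hx. specialize (Hgt x ltac:(unfold y1 in *; lra)).
      pose proof (Hphi_eq x) as Hpe. pose proof (Hphi_pos x). destruct (Hs x).
      assert (Hq : x * Rr x - 1 + (n - 1/2) * Rr x ^ 2
              = (Rr x - Phi x) * ((n - 1/2) * (Rr x + Phi x) + x)) by lra.
      rewrite Hq.
      assert (Hpx : (n - 1/2) * (2 * Phi x) + x = s x).
      { unfold Phi. fold (s x). field. lra. }
      assert (0 < (n - 1/2) * (Rr x + Phi x) + x) by nra.
      left. apply Rmult_lt_0_compat; lra. }
  pose proof (Rr_pos y1) as Hr1.
  destruct (yRr_bounds (1/2) ltac:(lra)) as [Y [HY HYb]].
  set (t := Rmax (Rmax y1 Y) (6 / Rr y1) + 1).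
  pose proof (Rmax_l (Rmax y1 Y) (6 / Rr y1)). pose proof (Rmax_r (Rmax y1 Y) (6 / Rr y1)).
  pose proof (Rmax_l y1 Y). pose proof (Rmax_r y1 Y).
  specialize (HYb t ltac:(unfold t; lra)). specialize (Hinc t ltac:(unfold t; lra)).
  assert (Ht0 : 6 / Rr y1 < t) by (unfold t; lra).
  assert (6 < t * Rr y1).
  { apply (Rmult_lt_compat_r (Rr y1)) in Ht0; auto. unfold Rdiv in Ht0. rewrite Rmult_assoc, Rinv_l in Ht0; lra. }
  assert (t * Rr t < 3) by lra.
  assert (0 < t) by (unfold t; lra).
  nra.
Qed.

Definition Lw y := (- y + sqrt (4 * n - 6 + y ^ 2)) / (2 * n - 1).

Lemma lower y : 3/2 < n -> Lw y < Rr y.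
Proof.
  intro Hn3. apply Rnot_le_lt. intro H0.
  set (s := fun y => sqrt (4 * n - 6 + y ^ 2)).
  assert (Hs : forall y, 0 < s y /\ s y * s y = 4 * n - 6 + y ^ 2).
  { intros t. unfold s. pose proof (pow2_ge_0 t). split. apply sqrt_lt_R0. lra.
    apply sqrt_sqrt. lra. }
  assert (Hsy : forall y, y < s y).
  { intros t. destruct (Hs t). destruct (Rle_or_lt t 0). lra. nra. }
  assert (Hsy2 : forall y, - y < s y).
  { intros t. destruct (Hs t). destruct (Rle_or_lt t 0). nra. lra. }
  assert (HdL : forall y, is_derive Lw y ((-1 + y / s y) / (2 * n - 1))).
  { intros t. unfold Lw. destruct (Hs t). auto_derive.
    - pose proof (pow2_ge_0 t). nra.
    - replace (t * (t * 1)) with (t ^ 2) by ring. unfold s in *. field. split. lra. lra. }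
  assert (HL_eq : forall y, (n - 1/2) * Lw y ^ 2 + y * Lw y = (4 * n - 6) / (2 * (2 * n - 1))).
  { intros t. unfold Lw. fold (s t). destruct (Hs t).
    replace ((n - 1 / 2) * ((- t + s t) / (2 * n - 1)) ^ 2 + t * ((- t + s t) / (2 * n - 1)))
      with ((s t * s t - t^2) / (2 * (2 * n - 1))) by (field; lra).
    rewrite H1. field. lra. }
  assert (Hcr := crossing (fun y => Lw y - Rr y)
      (fun y => (-1 + y / s y) / (2 * n - 1) - (y * Rr y - 1 + (n - 1/2) * Rr y ^ 2)) y).
  assert (Hgt : forall t, y < t -> Lw t - Rr t > 0).
  { apply Hcr.
    - intros t _. apply (dminus Lw Rr). apply HdL. apply Rr_d.
    - lra.
    - intros z _ Hz. assert (HR : Rr z = Lw z) by lra. rewrite HR.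
      pose proof (HL_eq z). destruct (Hs z). specialize (Hsy2 z).
      assert (-1 < z / s z). { apply (Rmult_lt_reg_r (s z)); auto. field_simplify; lra. }
      assert (0 < 2 * n - 1) by lra.
      assert (Hk : z * Lw z - 1 + (n - 1 / 2) * Lw z ^ 2 = - 2 / (2 * n - 1)).
      { replace (z * Lw z - 1 + (n - 1 / 2) * Lw z ^ 2) with ((n - 1/2) * Lw z ^ 2 + z * Lw z - 1) by ring.
        rewrite H. field. lra. }
      rewrite Hk.
      replace ((-1 + z / s z) / (2 * n - 1) - - 2 / (2 * n - 1)) with ((1 + z / s z) / (2 * n - 1)) by (field; lra).
      apply Rdiv_lt_0_compat; lra. }
  set (kap := (4 * n - 6) / (2 * (2 * n - 1))).
  assert (Hk1 : 0 < kap) by (unfold kap; apply Rdiv_lt_0_compat; lra).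
  assert (Hk2 : kap < 1) by (unfold kap; apply (Rmult_lt_reg_r (2 * (2 * n - 1))); [lra|]; field_simplify; lra).
  set (e := (1 - kap) / 4).
  destruct (yRr_bounds e ltac:(unfold e; lra)) as [Y [HY HYb]].
  set (t := Rmax Y y + 1).
  pose proof (Rmax_l Y y). pose proof (Rmax_r Y y).
  specialize (HYb t ltac:(unfold t; lra)). specialize (Hgt t ltac:(unfold t; lra)).
  assert (Ht : 0 < t) by (unfold t; lra).
  destruct (Hs t) as [Hst1 Hst2]. specialize (Hsy t).
  assert (HtL : t * Lw t <= kap).
  { unfold Lw. fold (s t). unfold kap.
    replace (t * ((- t + s t) / (2 * n - 1))) with (t * (s t * s t - t * t) / ((s t + t) * (2 * n - 1))) by (field; lra).
    rewrite Hst2. replace (4 * n - 6 + t ^ 2 - t * t) with (4 * n - 6) by ring.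
    apply (Rmult_le_reg_r ((s t + t) * (2 * (2 * n - 1)))). nra.
    field_simplify; try lra. nra. }
  assert (Hlow : (1 - e) / (1 + e) > kap).
  { apply (Rmult_lt_reg_r (1 + e)). unfold e; lra. field_simplify; unfold e in *; nra. }
  assert (t * Rr t < t * Lw t) by nra.
  lra.
Qed.

End Main.


Theorem theorem10 (U : R -> R -> R)
  (HU : forall a : R, is_PCF_U a (U a)) :
  (forall n x : R, 3 / 2 < n -> 0 <= x ->
     (x + sqrt (4 * n - 6 + x ^ 2)) / (2 * n - 1) < U n (- x) / U (n - 1) (- x) /\
     U n (- x) / U (n - 1) (- x) < (x + sqrt (4 * n - 2 + x ^ 2)) / (2 * n - 1)) /\
  (forall n x : R, 1 / 2 < n < 3 / 2 -> 0 <= x ->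
     U n (- x) / U (n - 1) (- x) < (x + sqrt (4 * n - 2 + x ^ 2)) / (2 * n - 1)).
Proof.
  assert (Hup : forall n x, 1/2 < n ->
     U n (- x) / U (n - 1) (- x) < (x + sqrt (4 * n - 2 + x ^ 2)) / (2 * n - 1)).
  { intros n x Hn.
    destruct (HU n) as [[du Hdu] Hul]. destruct (HU (n-1)) as [[dv Hdv] Hvl].
    assert (H := upper n (U n) du (U (n-1)) dv Hn (fun x => proj1 (Hdu x)) (fun x => proj2 (Hdu x)) Hul
                   (fun x => proj1 (Hdv x)) (fun x => proj2 (Hdv x)) Hvl (- x)).
    unfold Rr, Phi in H. replace ((- x) ^ 2) with (x ^ 2) in H by ring.
    rewrite Ropp_involutive in H. exact H. }
  split.
  - intros n x Hn Hx. split; [|apply Hup; lra].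
    destruct (HU n) as [[du Hdu] Hul]. destruct (HU (n-1)) as [[dv Hdv] Hvl].
    assert (H := lower n (U n) du (U (n-1)) dv ltac:(lra) (fun x => proj1 (Hdu x)) (fun x => proj2 (Hdu x)) Hul
                   (fun x => proj1 (Hdv x)) (fun x => proj2 (Hdv x)) Hvl (- x) Hn).
    unfold Rr, Lw in H. replace ((- x) ^ 2) with (x ^ 2) in H by ring.
    rewrite Ropp_involutive in H. exact H.
  - intros n x Hn Hx. apply Hup; lra.
Qed.
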